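(* Let $D_n$ denote the diameter of $\mathcal{T}_n$. Then $D_0=0$ and, for every $n\ge 1$, $$D_n=\begin{cases}2D_{n-1}+1 & \text{if } n \text{ is odd},\\ 2D_{n-1} & \text{if } n \text{ is even}.\end{cases}$$
   Context: For $n\in\mathbb{N}$ let $G_n=\mathbb{Z}_{2^n}\times\mathbb{Z}_{2^n}$ (additive group), so $|G_n|=N=4^n$. Let $S^+=\{(-1,-1),(1,0),(0,1)\}$ and $S=S^+\cup(-S^+)=\{\pm(1,0),\pm(0,1),\pm(1,1)\}$. The undirected graph $\mathcal{T}_n$ (the undirected ''arrowhead'', equivalently the undirected ''diamond'') is the Cayley graph $\Gamma(G_n,S)$: its vertex set is $G_n$ and each vertex $u$ is adjacent to $u+s$ for every $s\in S$ (arithmetic modulo $2^n$ in each coordinate). The diameter of a graph is the maximum, over all pairs of vertices, of the length of a shortest path between them. ($\mathcal{T}_0$ is a single vertex.) *)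

(* Defs.v *)
From mathcomp Require Import all_boot.
Unset Printing Implicit Defensive.

(* Vertices of T_n: G_n = Z_{2^n} x Z_{2^n}, coordinates represented by
   ordinals 'I_(2^n) with arithmetic modulo 2^n (valid also for n = 0). *)
Definition vert (n : nat) : finType := ('I_(2 ^ n) * 'I_(2 ^ n))%type.

Definition incm (m x : nat) : nat := (x + 1) %% m.
Definition decm (m x : nat) : nat := (x + m - 1) %% m.

(* Cayley graph adjacency: v = u + s with s in S = {±(1,0), ±(0,1), ±(1,1)} *)
Definition adj (n : nat) : rel (vert n) := fun u v =>
  let m := 2 ^ n in
  let x := val u.1 in let y := val u.2 in
  let x' := val v.1 in let y' := val v.2 in
  [|| (x' == incm m x) && (y' == y),
      (x' == decm m x) && (y' == y),
      (x' == x) && (y' == incm m y),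
      (x' == x) && (y' == decm m y),
      (x' == incm m x) && (y' == incm m y)
    | (x' == decm m x) && (y' == decm m y)].

Definition reach (n k : nat) (u v : vert n) : bool :=
  [exists p : k.-tuple (vert n), path (adj n) u p && (last u p == v)].

(* graph distance: least k with a walk of length k from u to v
   (the graph is connected, so some k < #|vert n| works) *)
Definition dist (n : nat) (u v : vert n) : nat :=
  find (fun k => reach n k u v) (iota 0 #|vert n|).

Definition diam (n : nat) : nat :=
  \max_(uv : vert n * vert n) dist n uv.1 uv.2.

(* Main.v *)
Require Import Defs.
From mathcomp Require Import all_boot.
From mathcomp Require Import zify.

Lemma m_gt0 n : 0 < 2 ^ n.
Proof. by rewrite expn_gt0. Qed.

Definition vm n (x y : nat) : vert n :=
  (Ordinal (ltn_pmod x (m_gt0 n)), Ordinal (ltn_pmod y (m_gt0 n))).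

Lemma vm_eq n x y x' y' : x %% 2 ^ n = x' %% 2 ^ n -> y %% 2 ^ n = y' %% 2 ^ n ->
  vm n x y = vm n x' y'.
Proof.
move=> hx hy; rewrite /vm; congr pair; exact: val_inj.
Qed.

Arguments vm_eq {n x y x' y'}.

Lemma vm_val {n} (u : vert n) : vm n u.1 u.2 = u.
Proof.
case: u => a b; rewrite /vm; congr pair; apply: val_inj => /=; exact: modn_small.
Qed.

Lemma incmE m x : incm m (x %% m) = (x + 1) %% m.
Proof. by rewrite /incm modnDml. Qed.

Lemma decmE m : 0 < m -> forall x, decm m (x %% m) = (x + (m - 1)) %% m.
Proof. by move=> hm x; rewrite /decm -addnBA // modnDml. Qed.

Definition steps m := [:: (1,0); (m-1,0); (0,1); (0,m-1); (1,1); (m-1,m-1)].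

Lemma adj_step n x y s1 s2 : (s1, s2) \in steps (2 ^ n) ->
  adj n (vm n x y) (vm n (x + s1) (y + s2)).
Proof.
have hm := m_gt0 n.
rewrite /steps !inE.
case/orP=> [/eqP[-> ->]|]; last case/orP=> [/eqP[-> ->]|]; last case/orP=> [/eqP[-> ->]|];
  last case/orP=> [/eqP[-> ->]|]; last case/orP=> [/eqP[-> ->]|/eqP[-> ->]].
all: by rewrite /adj /= !incmE !(decmE _ hm) ?addn0 !eqxx ?orbT.
Qed.

Lemma reach0 {n} (u : vert n) : reach n 0 u u.
Proof. by apply/existsP; exists [tuple]; rewrite /= eqxx. Qed.

Lemma reachS n k (u w v : vert n) : reach n k u w -> adj n w v -> reach n k.+1 u v.
Proof.
case/existsP => p /andP [hp /eqP hl] hwv.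
have sz : size (rcons p v) == k.+1 by rewrite size_rcons size_tuple.
apply/existsP; exists (Tuple sz) => /=.
by rewrite rcons_path hp hl hwv last_rcons eqxx.
Qed.

Arguments reachS {n k u w v}.

Lemma reach_line n k u x y s1 s2 i : reach n k u (vm n x y) ->
  (s1, s2) \in steps (2 ^ n) -> reach n (k + i) u (vm n (x + i * s1) (y + i * s2)).
Proof.
move=> h hs; elim: i => [|i IH]; first by rewrite !mul0n !addn0.
rewrite addnS; apply: (reachS IH).
by rewrite !mulSnr !addnA; apply: adj_step.
Qed.

Lemma reach_eq n k u a b a' b' : reach n k u (vm n a b) ->
  a %% 2 ^ n = a' %% 2 ^ n -> b %% 2 ^ n = b' %% 2 ^ n -> reach n k u (vm n a' b').
Proof. by move=> h ha hb; rewrite -(vm_eq ha hb). Qed.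

Arguments reach_line {n k u x y s1 s2} i.
Arguments reach_eq {n k u a b a' b'}.

Lemma modsub m z a : 0 < m -> a <= m -> (z + a * (m - 1)) %% m = (z + (m - a)) %% m.
Proof.
move=> hm ha; apply/eqP; rewrite -(eqn_modDr a) -!addnA subnK //.
have -> : a * (m - 1) + a = a * m by rewrite mulnBr muln1 subnK // leq_pmulr.
by rewrite addnC modnMDl modnDr.
Qed.

Definition K m := m.*2 %/ 3.

Lemma reach_up n x y D1 D2 : D1 < 2 ^ n -> D2 < 2 ^ n ->
  exists2 k, k <= K (2 ^ n) & reach n k (vm n x y) (vm n (x + D1) (y + D2)).
Proof.
have hm := m_gt0 n; move: (reach0 (vm n x y)).
rewrite /K; set m := 2 ^ n => h0 h1 h2.
have st : forall s, s \in steps m -> s \in steps (2 ^ n) by [].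
have R2 : forall i j s1 s2 t1 t2, (s1, s2) \in steps m -> (t1, t2) \in steps m ->
   reach n (i + j) (vm n x y) (vm n (x + i * s1 + j * t1) (y + i * s2 + j * t2)).
  move=> i j s1 s2 t1 t2 hs ht.
  have := reach_line j (reach_line i h0 hs) ht; by rewrite add0n.
have i1 : (1, 1) \in steps m by rewrite /steps !inE ?eqxx ?orbT.
have i2 : (m - 1, m - 1) \in steps m by rewrite /steps !inE ?eqxx ?orbT.
have i3 : (1, 0) \in steps m by rewrite /steps !inE ?eqxx ?orbT.
have i4 : (m - 1, 0) \in steps m by rewrite /steps !inE ?eqxx ?orbT.
have i5 : (0, 1) \in steps m by rewrite /steps !inE ?eqxx ?orbT.
have i6 : (0, m - 1) \in steps m by rewrite /steps !inE ?eqxx ?orbT.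
have ms : forall z a, a <= m -> (z + a * (m - 1)) %% m = (z + (m - a)) %% m.
  by move=> z a; apply: modsub.
case: (leqP D1 D2) => hD.
- case: (leqP D2 (m.*2 %/ 3)) => c1.
    exists (D1 + (D2 - D1)) => //; first lia.
    apply: reach_eq (R2 D1 (D2 - D1) _ _ _ _ i1 i5) _ _; congr modn; lia.
  case: (leqP (m - D1) (m.*2 %/ 3)) => c2.
    exists ((m - D2) + (D2 - D1)) => //; first lia.
    apply: reach_eq (R2 (m - D2) (D2 - D1) _ _ _ _ i2 i4) _ _.
      rewrite -addnA -mulnDl ms; last lia. congr modn; lia.
    rewrite muln0 addn0 ms; last lia. congr modn; lia.
  exists (D1 + (m - D2)); first lia.
  apply: reach_eq (R2 D1 (m - D2) _ _ _ _ i3 i6) _ _.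
    congr modn; lia.
  rewrite muln0 addn0 ms; last lia. congr modn; lia.
- case: (leqP D1 (m.*2 %/ 3)) => c1.
    exists (D2 + (D1 - D2)) => //; first lia.
    apply: reach_eq (R2 D2 (D1 - D2) _ _ _ _ i1 i3) _ _; congr modn; lia.
  case: (leqP (m - D2) (m.*2 %/ 3)) => c2.
    exists ((m - D1) + (D1 - D2)) => //; first lia.
    apply: reach_eq (R2 (m - D1) (D1 - D2) _ _ _ _ i2 i6) _ _.
      rewrite muln0 addn0 ms; last lia. congr modn; lia.
    rewrite -addnA -mulnDl ms; last lia. congr modn; lia.
  exists (D2 + (m - D1)); first lia.
  apply: reach_eq (R2 D2 (m - D1) _ _ _ _ i5 i4) _ _.
    rewrite muln0 addn0 ms; last lia. congr modn; lia.
  congr modn; lia.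
Qed.

Lemma card_vert n : #|vert n| = 2 ^ n * 2 ^ n.
Proof. by rewrite card_prod card_ord. Qed.

Lemma dist_le n k (u v : vert n) : reach n k u v -> k < #|vert n| -> dist n u v <= k.
Proof.
move=> h hk; rewrite /dist leqNgt; apply/negP => hf.
have := before_find 0 hf; rewrite nth_iota // add0n h //.
Qed.

Arguments dist_le {n k u v}.

Lemma dist_up n (u v : vert n) : dist n u v <= K (2 ^ n).
Proof.
have hm := m_gt0 n.
set x := val u.1; set y := val u.2; set x' := val v.1; set y' := val v.2.
have hx : x < 2 ^ n := ltn_ord u.1.
have hy : y < 2 ^ n := ltn_ord u.2.
have [k hk hr] := @reach_up n x y ((x' + 2 ^ n - x) %% 2 ^ n) ((y' + 2 ^ n - y) %% 2 ^ n)
  (ltn_pmod _ hm) (ltn_pmod _ hm).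
have e : vm n (x + (x' + 2 ^ n - x) %% 2 ^ n) (y + (y' + 2 ^ n - y) %% 2 ^ n) = v.
  rewrite -(vm_val v); apply: vm_eq; rewrite modnDmr.
    have -> : x + (x' + 2 ^ n - x) = x' + 2 ^ n by lia.
    by rewrite modnDr.
  have -> : y + (y' + 2 ^ n - y) = y' + 2 ^ n by lia.
  by rewrite modnDr.
rewrite e vm_val in hr.
refine (leq_trans (dist_le hr _) hk).
rewrite card_vert; apply: leq_ltn_trans hk _; rewrite /K.
have : 2 ^ n <= 2 ^ n * 2 ^ n by rewrite leq_pmulr.
lia.
Qed.

Definition F m x y :=
  minn (minn (maxn x y) (m - minn x y)) (minn (x + m - y) (y + m - x)).

Lemma leq_minS p a b : (p <= (minn a b).+1) = (p <= a.+1) && (p <= b.+1).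
Proof. by rewrite -leq_min -addn1 -[a.+1]addn1 -[b.+1]addn1 addn_minl. Qed.

Lemma incmP {m x x'} : x < m -> x' = incm m x ->
  (x' = x.+1 /\ x.+1 < m) \/ (x' = 0 /\ x.+1 = m).
Proof.
rewrite /incm addn1 => hx ->; case: (ltngtP x.+1 m) => h.
- by left; rewrite modn_small.
- lia.
- by right; rewrite h modnn.
Qed.

Lemma decmP {m x x'} : x < m -> x' = decm m x ->
  (x' = x.-1 /\ 0 < x) \/ (x' = m - 1 /\ x = 0).
Proof.
rewrite /decm => hx ->; case: x hx => [|x] hx.
- by right; rewrite add0n modn_small //; lia.
- left; split => //.
  have -> : x.+1 + m - 1 = x + m by lia.
  by rewrite -modnDmr modnn addn0 modn_small //; lia.
Qed.

Lemma F_lip n (u v : vert n) : adj n u v ->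
  F (2 ^ n) (val v.1) (val v.2) <= (F (2 ^ n) (val u.1) (val u.2)).+1.
Proof.
have h1 : val u.1 < 2 ^ n := ltn_ord u.1.
have h2 : val u.2 < 2 ^ n := ltn_ord u.2.
have h3 : val v.1 < 2 ^ n := ltn_ord v.1.
have h4 : val v.2 < 2 ^ n := ltn_ord v.2.
move: h1 h2 h3 h4; rewrite /adj /F /=.
move: (val u.1) (val u.2) (val v.1) (val v.2) => x y x' y'.
move: (2 ^ n) => m h1 h2 h3 h4.
case/orP=> [/andP[/eqP e1 /eqP e2]|/orP[/andP[/eqP e1 /eqP e2]|/orP[/andP[/eqP e1 /eqP e2]|/orP[/andP[/eqP e1 /eqP e2]|/orP[/andP[/eqP e1 /eqP e2]|/andP[/eqP e1 /eqP e2]]]]]].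
- rewrite e2; case: (incmP h1 e1) => [[-> ?]|[-> ?]]; rewrite !leq_minS !geq_min; repeat (apply/andP; split); lia.
- rewrite e2; case: (decmP h1 e1) => [[-> ?]|[-> ?]]; rewrite !leq_minS !geq_min; repeat (apply/andP; split); lia.
- rewrite e1; case: (incmP h2 e2) => [[-> ?]|[-> ?]]; rewrite !leq_minS !geq_min; repeat (apply/andP; split); lia.
- rewrite e1; case: (decmP h2 e2) => [[-> ?]|[-> ?]]; rewrite !leq_minS !geq_min; repeat (apply/andP; split); lia.
- case: (incmP h1 e1) => [[-> ?]|[-> ?]]; case: (incmP h2 e2) => [[-> ?]|[-> ?]]; rewrite !leq_minS !geq_min; repeat (apply/andP; split); lia.
- case: (decmP h1 e1) => [[-> ?]|[-> ?]]; case: (decmP h2 e2) => [[-> ?]|[-> ?]]; rewrite !leq_minS !geq_min; repeat (apply/andP; split); lia.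
Qed.

Lemma reach_F n k (u v : vert n) : reach n k u v ->
  F (2 ^ n) (val v.1) (val v.2) <= F (2 ^ n) (val u.1) (val u.2) + k.
Proof.
have L : forall (s : seq (vert n)) (u : vert n), path (adj n) u s ->
  F (2 ^ n) (val (last u s).1) (val (last u s).2) <= F (2 ^ n) (val u.1) (val u.2) + size s.
  elim => [|w s IH] u0 /=; first by rewrite addn0.
  case/andP => ha hs; apply: leq_trans (IH _ hs) _.
  by rewrite addnS -addSn leq_add2r F_lip.
case/existsP => p /andP [hp /eqP <-].
by have := L p u hp; rewrite size_tuple.
Qed.

Lemma dist_low n (u v : vert n) k :
  (forall j, reach n j u v -> k <= j) -> k <= #|vert n| -> k <= dist n u v.
Proof.
move=> H hk; rewrite /dist.
case: (boolP (has (fun j => reach n j u v) (iota 0 #|vert n|))) => hh.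
  have := nth_find 0 hh; rewrite nth_iota ?add0n; first exact: H.
  by move: hh; rewrite has_find size_iota.
by rewrite (hasNfind hh) size_iota.
Qed.

Lemma diam_val n : diam n = K (2 ^ n).
Proof.
apply/eqP; rewrite eqn_leq; apply/andP; split.
  by apply/bigmax_leqP => uv _; apply: dist_up.
case: n => [|n]; first by [].
have hm : 2 <= 2 ^ n.+1 by rewrite expnS leq_pmulr // m_gt0.
move: (m_gt0 n.+1) => hm0.
have hk : K (2 ^ n.+1) < 2 ^ n.+1 by rewrite /K; lia.
have hk1 : 0 < K (2 ^ n.+1) by rewrite /K; lia.
pose u := vm n.+1 0 0.
pose v := vm n.+1 (K (2 ^ n.+1)) (2 ^ n.+1 - K (2 ^ n.+1)).
apply: leq_trans (leq_bigmax (u, v)) => /=.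
apply: dist_low.
  move=> j /reach_F; rewrite /= !mod0n !modn_small; try lia.
  rewrite /F /K; lia.
rewrite card_vert; apply: leq_trans (ltnW hk) _; by rewrite leq_pmulr.
Qed.

Lemma pow2mod n : 2 ^ n %% 3 = if odd n then 2 else 1.
Proof.
elim: n => [|n IH] //; rewrite expnS -modnMmr IH /=.
by case: (odd n).
Qed.

Theorem lemma1 :
  diam 0 = 0 /\
  (forall n : nat, 1 <= n ->
     diam n = (if odd n then (diam n.-1).*2.+1 else (diam n.-1).*2)).
Proof.
split; first by rewrite diam_val.
case=> [|n] // _; rewrite !diam_val /= /K expnS.
have := pow2mod n; case: (odd n) => /= h; lia.
Qed.
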